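(* Let $\mathbf{v}(x)\in\mathbb{R}^K$, $x$ ranging over a finite index set, with $\mathbf{v}(x)\ne\mathbf{0}$ for all $x$, let $\lambda_F\ge0$, and let $\mathbf{S}^{(k)}$ be a real invertible $K\times K$ matrix. Define, for invertible $K\times K$ matrices $\mathbf{S}$, $$R_F^{(k)}(\mathbf{S})=\sum_x\frac{0.5}{\|\mathbf{S}^{(k)}\mathbf{v}(x)\|_2}\|\mathbf{S}\mathbf{v}(x)\|_2^2-\tfrac12\log\det(\mathbf{S}\mathbf{S}^T)+\tfrac{\lambda_F}{2}\|\mathbf{S}\|_F^2,$$ and $\mathbf{A}_k=\sum_x\frac{1}{\|\mathbf{S}^{(k)}\mathbf{v}(x)\|_2}\mathbf{v}(x)\mathbf{v}(x)^T$ with eigendecomposition $\mathbf{A}_k=\mathbf{U}_k\mathbf{D}_k\mathbf{U}_k^T$ ($\mathbf{U}_k$ orthogonal, $\mathbf{D}_k$ diagonal). Assume $\mathbf{D}_k+\lambda_F\mathbf{I}$ is positive definite. Then the minimum of $R_F^{(k)}$ over $\mathbf{S}$ is attained at $\mathbf{S}^{(k+1)}=(\mathbf{D}_k+\lambda_F\mathbf{I})^{-1/2}\mathbf{U}_k^T$.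
   Context: $\|\cdot\|_F$ denotes the Frobenius norm; $R_F^{(k)}$ is the majorizer used in a majorization–minimization scheme for estimating the structure matrix $\mathbf{S}$ of a multivariate Laplacian prior on multi-order signal derivatives $\mathbf{v}(x)=(\mathbf{L}*g)(x)$. *)

(* Defs.v *)
From HB Require Import structures.
From mathcomp Require Import all_boot all_order all_algebra.
From mathcomp Require Import all_classical all_reals all_analysis.
Set Implicit Arguments. Unset Strict Implicit. Unset Printing Implicit Defensive.
Import Order.TTheory GRing.Theory Num.Theory.
Local Open Scope ring_scope.

Definition norm2 (R : realType) (K : nat) (w : 'cV[R]_K) : R :=
  Num.sqrt (\sum_(i < K) (w i 0) ^+ 2).

Definition frob2 (R : realType) (K : nat) (S : 'M[R]_K) : R :=
  \sum_(i < K) \sum_(j < K) (S i j) ^+ 2.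

Definition posdef (R : realType) (K : nat) (M : 'M[R]_K) : Prop :=
  M^T = M /\ forall z : 'cV[R]_K, z != 0 -> 0 < (z^T *m M *m z) 0 0.

Definition RF (R : realType) (K : nat) (T : finType) (v : T -> 'cV[R]_K)
    (lam : R) (Sk S : 'M[R]_K) : R :=
  \sum_(x : T) ((1/2) / norm2 (Sk *m v x)) * (norm2 (S *m v x)) ^+ 2
  - (1/2) * ln (\det (S *m S^T))
  + lam / 2 * frob2 S.

Definition Amat (R : realType) (K : nat) (T : finType) (v : T -> 'cV[R]_K)
    (Sk : 'M[R]_K) : 'M[R]_K :=
  \sum_(x : T) (norm2 (Sk *m v x))^-1 *: (v x *m (v x)^T).

(* (D + lam I)^{-1/2} for D = diag_mx d with D + lam I positive definite:
   the diagonal matrix with entries (d_i + lam)^{-1/2}. *)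
Definition invsqrt_diag (R : realType) (K : nat) (d : 'rV[R]_K) (lam : R)
    : 'M[R]_K :=
  diag_mx (\row_(i < K) (Num.sqrt (d 0 i + lam))^-1).

(* Main.v *)
Require Import Defs.
From HB Require Import structures.
From mathcomp Require Import all_boot all_order all_algebra.
From mathcomp Require Import all_classical all_reals all_analysis.
From mathcomp Require Import ring lra.
Import Order.TTheory GRing.Theory Num.Theory.
Local Open Scope ring_scope.

Section S.
Variable R : realType.

Lemma qform_block n (A : 'M[R]_1) (b : 'M[R]_(1, n)) (c : 'M[R]_(n, 1)) (D : 'M[R]_n)
  (y : 'cV[R]_1) (z : 'cV[R]_n) :
  (col_mx y z)^T *m (block_mx A b c D : 'M[R]_(1+n)) *m col_mx y z =
  y^T *m A *m y + y^T *m b *m z + z^T *m c *m y + z^T *m D *m z.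
Proof.
rewrite tr_col_mx mul_row_block mul_row_col !mulmxDl ?mulmxA.
by rewrite !addrA (addrAC (y^T *m A *m y)).
Qed.

Lemma pd_block n (a : R) (b : 'M[R]_(1, n)) (c : 'M[R]_(n, 1)) (D : 'M[R]_n) :
  posdef (block_mx a%:M b c D : 'M[R]_(1+n)) ->
  [/\ 0 < a, c = b^T, posdef (D - a^-1 *: (c *m b)),
      \det (block_mx a%:M b c D : 'M[R]_(1+n)) = a * \det (D - a^-1 *: (c *m b)) &
      \tr (block_mx a%:M b c D : 'M[R]_(1+n)) = a + \tr (D - a^-1 *: (c *m b)) + a^-1 * \tr (b *m b^T)].
Proof.
move=> [Gs Gp].
have /eq_block_mx[_ bc cb DD] : block_mx (a%:M)^T c^T b^T D^T = block_mx a%:M b c D :> 'M[R]_(1+n).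
  by rewrite -tr_block_mx.
have a0 : 0 < a.
  have := Gp (col_mx 1 0); rewrite col_mx_eq0 oner_eq0 /= => /(_ isT).
  by rewrite qform_block trmx0 trmx1 !mulmx0 !mul0mx mul1mx mulmx1 !addr0 mxE eqxx mulr1n.
have cE : c = b^T by rewrite -cb.
split => //.
- split.
    by rewrite linearB /= linearZ /= trmx_mul cE trmxK DD.
  move=> z z0.
  set s := (b *m z) 0 0.
  have := Gp (col_mx ((- a^-1 * s)%:M) z); rewrite col_mx_eq0 (negPf z0) andbF => /(_ isT).
  have bz : b *m z = s%:M by apply: mx11_scalar.
  have zc : z^T *m c = s%:M by rewrite cE -trmx_mul bz tr_scalar_mx.
  rewrite qform_block tr_scalar_mx -(mulmxA _ b z) bz zc -!scalar_mxM.
  rewrite mulmxBr mulmxBl -scalemxAr -scalemxAl !mulmxA zc -(mulmxA _ b z) bz -scalar_mxM.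
  rewrite !mxE !eqxx !mulr1n.
  set q := (\sum_j _).
  have an : a != 0 by rewrite gt_eqF.
  suff -> : - a^-1 * s * a * (- a^-1 * s) + - a^-1 * s * s + s * (- a^-1 * s) + q = q - a^-1 * (s * s) by [].
  by field.
- have an : a != 0 by rewrite gt_eqF.
  have -> : block_mx a%:M b c D = block_mx 1%:M 0 (a^-1 *: c) 1%:M *m block_mx a%:M b 0 (D - a^-1 *: (c *m b)) :> 'M[R]_(1+n).
    rewrite mulmx_block !mul1mx !mul0mx !addr0 mul_mx_scalar scalerA mulfV // scale1r.
    by rewrite -scalemxAl addrC subrK.
  by rewrite det_mulmx det_lblock det_ublock !det1 det_scalar expr1 !mul1r.
- rewrite mxtrace_block mxtrace_scalar mulr1n raddfB /= mxtraceZ cE mxtrace_mulC.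
  by rewrite -addrA subrK.
Qed.

Lemma pd_logdet n (G : 'M[R]_n) : posdef G -> 0 < \det G /\ n%:R <= \tr G - ln (\det G).
Proof.
elim: n G => [|n IH] G pG.
  by rewrite det_mx00 ln1 subr0 /mxtrace big_ord0; split.
have GE : G = block_mx (ulsubmx (G : 'M[R]_(1+n)) 0 0)%:M (ursubmx (G : 'M[R]_(1+n)))
   (dlsubmx (G : 'M[R]_(1+n))) (drsubmx (G : 'M[R]_(1+n))) :> 'M[R]_(1+n)
  by rewrite -mx11_scalar submxK.
move: pG; rewrite GE => /pd_block [a0 _ pS detE trE].
have [dS IHS] := IH _ pS.
rewrite detE trE; split; first by rewrite mulr_gt0.
set a := ulsubmx _ 0 0 in a0 IHS *.
set b := ursubmx _.
have ht : 0 <= \tr (b *m b^T).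
  rewrite /mxtrace big_ord1 mxE; apply: sumr_ge0 => j _; by rewrite !mxE -expr2 sqr_ge0.
have ht' : 0 <= a^-1 * \tr (b *m b^T) by rewrite mulr_ge0 // invr_ge0 ltW.
have hl : ln a <= a - 1.
  have := @le_ln1Dx R (a - 1); rewrite addrCA subrr addr0; apply; lra.
rewrite lnM ?posrE // -natr1.
lra.
Qed.

Lemma tr_wwT K (w : 'cV[R]_K) : \tr (w *m w^T) = \sum_i (w i 0) ^+ 2.
Proof.
by rewrite /mxtrace; apply: eq_bigr => i _; rewrite mxE big_ord1 !mxE expr2.
Qed.

Lemma frob2E K (S : 'M[R]_K) : frob2 S = \tr (S *m S^T).
Proof.
rewrite /frob2 /mxtrace; apply: eq_bigr => i _; rewrite mxE.
by apply: eq_bigr => j _; rewrite !mxE expr2.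
Qed.

Lemma norm2E K (w : 'cV[R]_K) : norm2 w ^+ 2 = \tr (w *m w^T).
Proof.
rewrite /norm2 sqr_sqrtr ?tr_wwT //.
by apply: sumr_ge0 => i _; apply: sqr_ge0.
Qed.

Lemma RFE K (T : finType) (v : T -> 'cV[R]_K) lam (Sk S : 'M[R]_K) :
  RF v lam Sk S = 1/2 * \tr (S *m (Amat v Sk + lam%:M) *m S^T)
                  - 1/2 * ln (\det (S *m S^T)).
Proof.
rewrite /RF /Amat frob2E.
suff -> : 1/2 * \tr (S *m ((\sum_x (norm2 (Sk *m v x))^-1 *: (v x *m (v x)^T)) + lam%:M) *m S^T)
   = \sum_x 1 / 2 / norm2 (Sk *m v x) * norm2 (S *m v x) ^+ 2 + lam / 2 * \tr (S *m S^T).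
  by rewrite addrAC.
rewrite mulmxDr mulmxDl mulmx_sumr mulmx_suml mxtraceD raddf_sum /=.
rewrite mul_mx_scalar -scalemxAl mxtraceZ mulrDr big_distrr /=; congr (_ + _).
  apply: eq_bigr => x _.
  rewrite -scalemxAr -scalemxAl mxtraceZ norm2E trmx_mul !mulmxA.
  by rewrite mulrA mul1r.
ring.
Qed.
End S.
Arguments pd_logdet {R n G}.

Theorem proposition2 (R : realType) (K : nat) (T : finType)
    (v : T -> 'cV[R]_K) (lam : R) (Sk U : 'M[R]_K) (d : 'rV[R]_K) :
  (forall x, v x != 0) ->
  0 <= lam ->
  Sk \in unitmx ->
  U^T *m U = 1%:M ->
  Amat v Sk = U *m diag_mx d *m U^T ->
  posdef (diag_mx d + lam%:M) ->
  let Snext := invsqrt_diag d lam *m U^T in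
  Snext \in unitmx /\
  forall S : 'M[R]_K, S \in unitmx -> RF v lam Sk Snext <= RF v lam Sk S.
Proof.
move=> _ lam0 _ hU hA pE Snext.
set E := diag_mx d + lam%:M in pE *.
have ev0 : forall i, 0 < d 0 i + lam.
  move=> i; have [_ Ep] := pE.
  have : delta_mx i 0 != 0 :> 'cV[R]_K.
    apply/negP => /eqP /matrixP /(_ i 0); rewrite !mxE !eqxx /= => /eqP.
    by rewrite oner_eq0.
  move=> /Ep; rewrite trmx_delta -rowE -colE !mxE !eqxx !mulr1n.
  by [].
set Qm := diag_mx (\row_i Num.sqrt (d 0 i + lam)).
have QiQ : invsqrt_diag d lam *m Qm = 1%:M.
  rewrite /invsqrt_diag mulmx_diag; apply/matrixP => i j; rewrite !mxE mulVf //.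
  by rewrite gt_eqF // sqrtr_gt0.
have QQ : Qm *m Qm = E.
  rewrite mulmx_diag; apply/matrixP => i j; rewrite !mxE -expr2 sqr_sqrtr ?ltW //.
  by rewrite mulrnDl.
have QT : Qm^T = Qm := tr_diag_mx _.
have UUt : U *m U^T = 1%:M := mulmx1C hU.
have ME : Amat v Sk + lam%:M = U *m E *m U^T.
  by rewrite hA /E mulmxDr mulmxDl mul_mx_scalar -scalemxAl UUt scalemx1.
have [Qiu Qu] := mulmx1_unit QiQ.
have [Utu Uu] := mulmx1_unit hU.
have [dE _] := pd_logdet pE.
have dU : \det U ^+ 2 = 1.
  by move: (congr1 determinant hU); rewrite det_mulmx det_tr det1 expr2.
have key : forall S, S \in unitmx -> RF v lam Sk S =
    1/2 * (\tr ((S *m U *m Qm) *m (S *m U *m Qm)^T)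
           - ln (\det ((S *m U *m Qm) *m (S *m U *m Qm)^T))) + 1/2 * ln (\det E).
  move=> S Su.
  have G1 : (S *m U *m Qm) *m (S *m U *m Qm)^T = S *m (Amat v Sk + lam%:M) *m S^T.
    by rewrite ME !trmx_mul QT !mulmxA -(mulmxA (S *m U) Qm Qm) QQ.
  have G2 : \det ((S *m U *m Qm) *m (S *m U *m Qm)^T) = \det (S *m S^T) * \det E.
    rewrite -QQ !det_mulmx det_tr !det_mulmx !det_tr -[RHS]mulr1 -dU; ring.
  have dS : 0 < \det (S *m S^T).
    have : \det S != 0 by rewrite -unitfE -unitmxE.
    by rewrite det_mulmx det_tr -expr2 lt0r sqr_ge0 andbT sqrf_eq0.
  rewrite RFE -G1 G2 lnM ?posrE //; ring.
have Snu : Snext \in unitmx by rewrite unitmx_mul Qiu unitmx_tr Uu.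
split => // S Su.
rewrite !key //.
have -> : Snext *m U *m Qm = 1%:M by rewrite /Snext -(mulmxA _ U^T) hU mulmx1 QiQ.
rewrite trmx1 mulmx1 mxtrace1 det1 ln1 subr0.
set B := S *m U *m Qm.
have Bu : B^T \in unitmx by rewrite unitmx_tr !unitmx_mul Su Uu Qu.
clearbody B.
have pG : posdef (B *m B^T).
  split; first by rewrite trmx_mul trmxK.
  move=> z z0.
  set w := B^T *m z.
  have w0 : w != 0.
    apply: contra z0 => /eqP w0; by rewrite -(mulKmx Bu z) -/w w0 mulmx0.
  have -> : z^T *m (B *m B^T) *m z = w^T *m w .
  by rewrite /w trmx_mul trmxK !mulmxA.
  have hnn : forall j, 0 <= w^T 0 j * w j 0 by move=> j; rewrite mxE -expr2 sqr_ge0.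
  rewrite mxE lt0r sumr_ge0 ?andbT; last by move=> j _; apply: hnn.
  apply: contra w0 => /eqP H; apply/eqP/matrixP => i j; rewrite (ord1 j) [RHS]mxE.
  have := psumr_eq0P (fun j _ => hnn j) H (i:=i) isT.
  by rewrite mxE -expr2 => /eqP; rewrite sqrf_eq0 => /eqP.
have [_ hG] := pd_logdet pG.
lra.
Qed.
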